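(* If $\Theta\vdash S$ is a minimal type for $\mathsf{F_{<:}^\top}$ and $\Theta\vdash^\top T$ is an $\mathsf{F_{<:}^\top}$ type (over an $\mathsf{F_{<:}^\top}$ context $\Theta$), then the subtyping algorithm terminates on the input $\Theta\vdash_A S<:T$.
   Context: System $\mathsf{F_{<:}^{K\top}}$: raw types $T ::= \top \mid X \mid T\to T \mid \forall^{\mathsf K}(X<:T).T \mid \forall^\top(X<:T).T$, up to $\alpha$-conversion. Contexts $\Theta$: finite sequences of $X<:T$ or $x:T$ with distinct variables, each type well-formed over the preceding part. Algorithmic subtyping $\Theta\vdash_A S<:T$ is generated by: (1) $\Theta\vdash_A T<:\top$; (2) $\Theta\vdash_A X<:X$; (3) if $T\not\equiv\top$, $T\not\equiv X$ and $\Theta,X<:S,\Theta'\vdash_A S<:T$, then $\Theta,X<:S,\Theta'\vdash_A X<:T$; (4) from $\Theta\vdash_A S'<:S$ and $\Theta\vdash_A T<:T'$ infer $\Theta\vdash_A S\to T<:S'\to T'$; (5) from $\Theta,X<:S\vdash_A T<:T'$ infer $\Theta\vdash_A\forall^{\mathsf K}(X<:S).T<:\forall^{\mathsf K}(X<:S).T'$; (6) from $\Theta\vdash_A T_0<:S_0$ and $\Theta,X<:S_0\vdash_A S_1<:T_1$ infer $\Theta\vdash_A\forall^{\mathsf K}(X<:S_0).S_1<:\forall^\top(X<:T_0).T_1$; (7) from $\Theta\vdash_A T_0<:S_0$ and $\Theta,X<:\top\vdash_A S_1<:T_1$ infer $\Theta\vdash_A\forall^\top(X<:S_0).S_1<:\forall^\top(X<:T_0).T_1$.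 Each judgement is the conclusion of at most one rule instance; the subtyping algorithm is the resulting deterministic goal-directed search: given $\Theta\vdash_A S<:T$, determine the unique applicable rule (rejecting if none), and recursively check its premises in order, accepting iff all are accepted. An $\mathsf{F_{<:}^\top}$ type/context is one containing only $\forall^\top$ quantifiers. The minimal types for $\mathsf{F_{<:}^\top}$ are the types generated by $T ::= S \mid \forall^{\mathsf K}(X<:S).T \mid S\to T$, where $S$ ranges over $\mathsf{F_{<:}^\top}$ types. *)

(* Defs.v *)
From Stdlib Require Import List Arith.
Import ListNotations.

(* Raw types up to alpha-conversion: de Bruijn indices for type variables.
   TVar 0 is the innermost bound / most recently declared type variable. *)
Inductive ty : Type :=
  | Top : ty
  | TVar : nat -> ty
  | Arr : ty -> ty -> ty
  | AllK : ty -> ty -> ty   (* forall^K (X <: bound). body *)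
  | AllT : ty -> ty -> ty.  (* forall^Top (X <: bound). body *)

Fixpoint tshift (d c : nat) (T : ty) : ty :=
  match T with
  | Top => Top
  | TVar n => if c <=? n then TVar (n + d) else TVar n
  | Arr A B => Arr (tshift d c A) (tshift d c B)
  | AllK A B => AllK (tshift d c A) (tshift d (S c) B)
  | AllT A B => AllT (tshift d c A) (tshift d (S c) B)
  end.

Fixpoint wf_ty (n : nat) (T : ty) : Prop :=
  match T with
  | Top => True
  | TVar m => m < n
  | Arr A B => wf_ty n A /\ wf_ty n B
  | AllK A B => wf_ty n A /\ wf_ty (S n) B
  | AllT A B => wf_ty n A /\ wf_ty (S n) B
  end.

Fixpoint ftop_ty (T : ty) : Prop :=
  match T with
  | Top => True
  | TVar _ => True
  | Arr A B => ftop_ty A /\ ftop_ty B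
  | AllK _ _ => False
  | AllT A B => ftop_ty A /\ ftop_ty B
  end.

Fixpoint minimal_ty (T : ty) : Prop :=
  ftop_ty T \/
  match T with
  | AllK S0 T1 => ftop_ty S0 /\ minimal_ty T1
  | Arr S0 T1 => ftop_ty S0 /\ minimal_ty T1
  | _ => False
  end.

(* Context entries: type-variable bindings X <: T and term bindings x : T.
   Contexts are lists with the most recent entry at the head. *)
Inductive entry : Type :=
  | EType : ty -> entry
  | ETerm : ty -> entry.

Definition ctx := list entry.

Fixpoint ntv (G : ctx) : nat :=
  match G with
  | [] => 0
  | EType _ :: G' => S (ntv G')
  | ETerm _ :: G' => ntv G'
  end.

Definition entry_ty (e : entry) : ty :=
  match e with EType T => T | ETerm T => T end.

(* each type is well formed over the preceding part of the context
   (distinctness of variables is automatic in the nameless representation) *)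
Fixpoint wf_ctx (G : ctx) : Prop :=
  match G with
  | [] => True
  | e :: G' => wf_ctx G' /\ wf_ty (ntv G') (entry_ty e)
  end.

Definition ftop_ctx (G : ctx) : Prop := Forall (fun e => ftop_ty (entry_ty e)) G.

(* bound of type variable n in G, shifted so as to live over the whole of G *)
Fixpoint get_bound (G : ctx) (n : nat) : option ty :=
  match G with
  | [] => None
  | ETerm _ :: G' => get_bound G' n
  | EType T :: G' =>
      match n with
      | 0 => Some (tshift 1 0 T)
      | S m => option_map (tshift 1 0) (get_bound G' m)
      end
  end.

Definition no_rule (S T : ty) : Prop :=
  match S, T with
  | _, Top => False
  | TVar _, _ => False
  | Arr _ _, Arr _ _ => False
  | AllK _ _, AllK _ _ => False
  | AllK _ _, AllT _ _ => False
  | AllT _ _, AllT _ _ => False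
  | _, _ => True
  end.

(* Big-step semantics of the deterministic goal-directed subtyping algorithm:
   [alg_run G S T b] means the algorithm, run on G |-_A S <: T, halts and
   returns b (true = accept, false = reject).  Premises are checked in order,
   stopping at the first rejected premise. *)
Inductive alg_run : ctx -> ty -> ty -> bool -> Prop :=
  | ar_top : forall G S, alg_run G S Top true
  | ar_refl : forall G n, alg_run G (TVar n) (TVar n) true
  | ar_var : forall G n T U b,
      T <> Top -> T <> TVar n -> get_bound G n = Some U ->
      alg_run G U T b -> alg_run G (TVar n) T b
  | ar_var_unbound : forall G n T,
      T <> Top -> T <> TVar n -> get_bound G n = None ->
      alg_run G (TVar n) T false
  | ar_arr_rej : forall G S1 S2 T1 T2,
      alg_run G T1 S1 false -> alg_run G (Arr S1 S2) (Arr T1 T2) false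
  | ar_arr : forall G S1 S2 T1 T2 b,
      alg_run G T1 S1 true -> alg_run G S2 T2 b ->
      alg_run G (Arr S1 S2) (Arr T1 T2) b
  | ar_allK : forall G S0 S1 T1 b,
      alg_run (EType S0 :: G) S1 T1 b ->
      alg_run G (AllK S0 S1) (AllK S0 T1) b
  | ar_allK_neq : forall G S0 S1 T0 T1,
      S0 <> T0 -> alg_run G (AllK S0 S1) (AllK T0 T1) false
  | ar_KT_rej : forall G S0 S1 T0 T1,
      alg_run G T0 S0 false -> alg_run G (AllK S0 S1) (AllT T0 T1) false
  | ar_KT : forall G S0 S1 T0 T1 b,
      alg_run G T0 S0 true -> alg_run (EType S0 :: G) S1 T1 b ->
      alg_run G (AllK S0 S1) (AllT T0 T1) b
  | ar_TT_rej : forall G S0 S1 T0 T1,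
      alg_run G T0 S0 false -> alg_run G (AllT S0 S1) (AllT T0 T1) false
  | ar_TT : forall G S0 S1 T0 T1 b,
      alg_run G T0 S0 true -> alg_run (EType Top :: G) S1 T1 b ->
      alg_run G (AllT S0 S1) (AllT T0 T1) b
  | ar_none : forall G S T, no_rule S T -> alg_run G S T false.

Definition alg_terminates (G : ctx) (S T : ty) : Prop :=
  exists b, alg_run G S T b.

(* Main.v *)
Require Import Defs.
From Stdlib Require Import List Arith Lia.
Import ListNotations.

Fixpoint wt (ws : list nat) (T : ty) : nat :=
  match T with
  | Top => 1
  | TVar n => nth n ws 0 + 1
  | Arr A B => wt ws A + wt ws B + 1
  | AllK _ _ => 1
  | AllT A B => wt ws A + wt (2 :: ws) B + 1
  end.

Fixpoint cw (G : ctx) : list nat :=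
  match G with
  | [] => []
  | ETerm _ :: G' => cw G'
  | EType T :: G' => (wt (cw G') T + 1) :: cw G'
  end.

Fixpoint ins (c x : nat) (ws : list nat) : list nat :=
  match c with
  | 0 => x :: ws
  | S c' => hd 0 ws :: ins c' x (tl ws)
  end.

Lemma nth_ins_lt : forall c x n ws, n < c -> nth n (ins c x ws) 0 = nth n ws 0.
Proof.
  induction c; intros x n ws H; [lia|].
  destruct n; simpl.
  - destruct ws; reflexivity.
  - rewrite IHc by lia. destruct ws; simpl; [destruct n|]; reflexivity.
Qed.

Lemma nth_ins_ge : forall c x n ws, c <= n -> nth (S n) (ins c x ws) 0 = nth n ws 0.
Proof.
  induction c; intros x n ws H; [reflexivity|].
  destruct n; [lia|]. simpl.
  rewrite IHc by lia. destruct ws; simpl; [destruct n|]; reflexivity.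
Qed.

Lemma wt_shift : forall T c x ws, wt (ins c x ws) (tshift 1 c T) = wt ws T.
Proof.
  induction T; intros c x ws; simpl; try reflexivity.
  - destruct (c <=? n) eqn:E; simpl.
    + apply Nat.leb_le in E. replace (n + 1) with (S n) by lia. rewrite nth_ins_ge by lia. reflexivity.
    + apply Nat.leb_gt in E. rewrite nth_ins_lt by lia. reflexivity.
  - rewrite IHT1, IHT2. reflexivity.
  - rewrite IHT1. change (2 :: ins c x ws) with (ins (S c) x (2 :: ws)).
    rewrite IHT2. reflexivity.
Qed.

Lemma ftop_shift : forall T d c, ftop_ty (tshift d c T) <-> ftop_ty T.
Proof.
  induction T; intros d c; simpl; try tauto.
  - destruct (c <=? n); simpl; tauto.
  - rewrite IHT1, IHT2; tauto.
  - rewrite IHT1, IHT2; tauto.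
Qed.

Lemma get_bound_wt : forall G n U, get_bound G n = Some U ->
  nth n (cw G) 0 = wt (cw G) U + 1.
Proof.
  induction G as [|e G IH]; intros n U H; simpl in *; [discriminate|].
  destruct e as [T|T]; [|apply IH; exact H].
  destruct n as [|m].
  - injection H as <-. simpl.
    change ((wt (cw G) T + 1) :: cw G) with (ins 0 (wt (cw G) T + 1) (cw G)).
    rewrite wt_shift. reflexivity.
  - destruct (get_bound G m) eqn:E; simpl in H; [|discriminate].
    injection H as <-. simpl. rewrite (IH _ _ E).
    change ((wt (cw G) T + 1) :: cw G) with (ins 0 (wt (cw G) T + 1) (cw G)).
    rewrite wt_shift. reflexivity.
Qed.

Lemma get_bound_ftop : forall G n U, ftop_ctx G -> get_bound G n = Some U -> ftop_ty U.
Proof.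
  induction G as [|e G IH]; intros n U HF H; simpl in *; [discriminate|].
  inversion HF; subst.
  destruct e as [T|T]; [|eapply IH; eauto].
  destruct n as [|m].
  - injection H as <-. apply ftop_shift. exact H2.
  - destruct (get_bound G m) eqn:E; simpl in H; [|discriminate].
    injection H as <-. apply ftop_shift. eapply IH; eauto.
Qed.

Lemma ftop_term : forall m G S T, wt (cw G) S + wt (cw G) T < m ->
  ftop_ctx G -> ftop_ty S -> ftop_ty T -> exists b, alg_run G S T b.
Proof.
  induction m; intros G S T Hm HG HS HT; [lia|].
  destruct T as [|k|T1 T2|T0 T1|T0 T1]; [exists true; constructor| | | simpl in HT; tauto |].
  - destruct S as [|n|S1 S2|S0 S1|S0 S1]; try (exists false; apply ar_none; exact I).
    + destruct (Nat.eq_dec n k) as [->|Hne]; [exists true; constructor|].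
      destruct (get_bound G n) as [U|] eqn:E.
      * assert (HU := get_bound_wt _ _ _ E).
        destruct (IHm G U (TVar k)) as [b Hb]; auto.
        -- simpl in Hm |- *. lia.
        -- eapply get_bound_ftop; eauto.
        -- exists b. eapply ar_var; eauto; congruence.
      * exists false. apply ar_var_unbound; auto; congruence.
  - destruct S as [|n|S1 S2|S0 S1|S0 S1]; try (exists false; apply ar_none; exact I).
    + destruct (get_bound G n) as [U|] eqn:E.
      * assert (HU := get_bound_wt _ _ _ E).
        destruct (IHm G U (Arr T1 T2)) as [b Hb]; auto.
        -- simpl in Hm |- *. lia.
        -- eapply get_bound_ftop; eauto.
        -- exists b. eapply ar_var; eauto; congruence.
      * exists false. apply ar_var_unbound; auto; congruence.
    + simpl in *. destruct (IHm G T1 S1) as [[|] Hb]; try tauto; try lia.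
      * destruct (IHm G S2 T2) as [b Hb2]; try tauto; try lia.
        exists b. apply ar_arr; auto.
      * exists false. apply ar_arr_rej; auto.
  - destruct S as [|n|S1 S2|S0 S1|S0 S1]; try (exists false; apply ar_none; exact I).
    + destruct (get_bound G n) as [U|] eqn:E.
      * assert (HU := get_bound_wt _ _ _ E).
        destruct (IHm G U (AllT T0 T1)) as [b Hb]; auto.
        -- simpl in Hm |- *. lia.
        -- eapply get_bound_ftop; eauto.
        -- exists b. eapply ar_var; eauto; congruence.
      * exists false. apply ar_var_unbound; auto; congruence.
    + simpl in HS; tauto.
    + simpl in *. destruct (IHm G T0 S0) as [[|] Hb]; try tauto; try lia.
      * destruct (IHm (EType Top :: G) S1 T1) as [b Hb2]; try tauto.
        -- simpl. lia.
        -- constructor; [exact I|exact HG].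
        -- exists b. apply ar_TT; auto.
      * exists false. apply ar_TT_rej; auto.
Qed.

Lemma min_term : forall S G T, ftop_ctx G -> minimal_ty S -> ftop_ty T ->
  exists b, alg_run G S T b.
Proof.
  induction S as [|n|S0 IH0 S1 IH1|S0 IH0 S1 IH1|S0 IH0 S1 IH1]; intros G T HG HS HT;
  destruct HS as [HS|HS];
  try (eapply ftop_term; eauto; fail); try contradiction.
  - destruct HS as [HS0 HS1].
    destruct T as [|k|T1 T2|T0 T1|T0 T1]; try (exists false; apply ar_none; exact I);
      try (exists true; apply ar_top); try (simpl in HT; tauto).
    simpl in HT. destruct (ftop_term _ G T1 S0 (Nat.lt_succ_diag_r _)) as [[|] Hb]; try tauto.
    + destruct (IH1 G T2) as [b Hb2]; try tauto. exists b. apply ar_arr; auto.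
    + exists false. apply ar_arr_rej; auto.
  - destruct HS as [HS0 HS1].
    destruct T as [|k|T1 T2|T0 T1|T0 T1]; try (exists false; apply ar_none; exact I);
      try (exists true; apply ar_top); try (simpl in HT; tauto).
    simpl in HT. destruct (ftop_term _ G T0 S0 (Nat.lt_succ_diag_r _)) as [[|] Hb]; try tauto.
    + destruct (IH1 (EType S0 :: G) T1) as [b Hb2]; try tauto.
      * constructor; assumption.
      * exists b. apply ar_KT; auto.
    + exists false. apply ar_KT_rej; auto.
Qed.

Theorem proposition8p3 (Theta : ctx) (S T : ty) :
  wf_ctx Theta -> ftop_ctx Theta ->
  wf_ty (ntv Theta) S -> minimal_ty S ->
  wf_ty (ntv Theta) T -> ftop_ty T ->
  alg_terminates Theta S T.
Proof.
  intros _ HG _ HS _ HT. apply min_term; auto.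
Qed.
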